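(* Let $\mathcal{R}$ be a non-commutative prime ring of characteristic different from $2$, with Utumi quotient ring $\mathcal{U}$ and extended centroid $\mathcal{C}$, and let $f(\zeta_1,\ldots,\zeta_n)$ be a multilinear polynomial over $\mathcal{C}$ which is not central-valued on $\mathcal{R}$. Let $a_1,\ldots,a_6\in\mathcal{U}$ be such that $$a_1f(\zeta)^2+a_2f(\zeta)a_3f(\zeta)+f(\zeta)a_5f(\zeta)a_6+f(\zeta)a_4f(\zeta)-a_5f(\zeta)^2a_6=0$$ for all $\zeta=(\zeta_1,\ldots,\zeta_n)\in\mathcal{R}^n$. If $\mathcal{R}$ does not satisfy any nontrivial generalized polynomial identity, then one of the following holds: (1) $a_2,a_5\in\mathcal{C}$; (2) $a_2,a_6\in\mathcal{C}$; (3) $a_3,a_5\in\mathcal{C}$; (4) $a_3,a_6\in\mathcal{C}$.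
   Context: A ring $\mathcal{R}$ is prime if $x\mathcal{R}y=0$ implies $x=0$ or $y=0$. $\mathcal{U}$ is the Utumi quotient ring of $\mathcal{R}$ and $\mathcal{C}$, its center, the extended centroid. A generalized polynomial identity is an element of the free product $\mathcal{U}*_{\mathcal{C}}\mathcal{C}\{X\}$ (noncommutative polynomials with coefficients from $\mathcal{U}$ interspersed) vanishing on all substitutions from $\mathcal{R}$; it is nontrivial if it is a nonzero element of that free product. A multilinear polynomial over $\mathcal{C}$ has each variable exactly once in every monomial; non-central means its values on $\mathcal{R}$ do not all lie in $\mathcal{C}$. *)

(* Defs.v *)
From HB Require Import structures.
From mathcomp Require Import all_boot all_order all_algebra all_fingroup.
Set Implicit Arguments. Unset Strict Implicit. Unset Printing Implicit Defensive.
Import Order.TTheory GRing.Theory Num.Theory.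
Local Open Scope ring_scope.

(* Conventions: the Utumi quotient ring U is a (unital, nonzero) ring, and the
   prime ring R is modelled as a (possibly non-unital) subring of U, given as a
   predicate R : U -> Prop.  U is pinned down by the standard characterising
   axioms of the (maximal right) Utumi quotient ring. *)

Section Defs.
Variable U : nzRingType.

Definition subring_of (R : U -> Prop) : Prop :=
  [/\ R 0, (forall x y, R x -> R y -> R (x - y)) &
      (forall x y, R x -> R y -> R (x * y))].

Definition prime_ring (R : U -> Prop) : Prop :=
  forall x y, R x -> R y -> (forall r, R r -> x * r * y = 0) -> x = 0 \/ y = 0.

Definition right_ideal_of (R I : U -> Prop) : Prop :=
  [/\ (forall x, I x -> R x), I 0, (forall x y, I x -> I y -> I (x - y)) &
      (forall x r, I x -> R r -> I (x * r))].

Definition dense_in (R I : U -> Prop) : Prop :=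
  forall r1 r2, R r1 -> R r2 -> r1 <> 0 ->
    exists r, [/\ R r, r1 * r <> 0 & I (r2 * r)].

Definition dense_right_ideal (R I : U -> Prop) : Prop :=
  right_ideal_of R I /\ dense_in R I.

Definition is_utumi_quotient (R : U -> Prop) : Prop :=
  [/\ subring_of R,
      (forall q, exists I, dense_right_ideal R I /\ forall x, I x -> R (q * x)),
      (forall q I, dense_right_ideal R I -> (forall x, I x -> q * x = 0) -> q = 0) &
      (forall I (phi : U -> U), dense_right_ideal R I ->
         (forall x, I x -> R (phi x)) ->
         (forall x y, I x -> I y -> phi (x + y) = phi x + phi y) ->
         (forall x r, I x -> R r -> phi (x * r) = phi x * r) ->
         exists q, forall x, I x -> phi x = q * x)].

(* extended centroid C = center of U *)
Definition ext_centroid (c : U) : Prop := forall u : U, c * u = u * c.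

Definition mlin_eval (n : nat) (alpha : 'S_n -> U) (z : 'I_n -> U) : U :=
  \sum_(s : 'S_n) alpha s * \prod_(i < n) z (s i).

(* Generalized monomials a0 x_{v1} a1 x_{v2} ... x_{vk} ak, stored as
   (a0, [:: (v1,a1); ...; (vk,ak)]) *)
Definition gmono := (U * seq (nat * U))%type.

Definition gmono_eval (x : nat -> U) (m : gmono) : U :=
  m.1 * \prod_(p <- m.2) (x p.1 * p.2).

Definition gsum := seq (int * gmono).

Definition gsum_eval (x : nat -> U) (s : gsum) : U :=
  \sum_(t <- s) (gmono_eval x t.2) *~ t.1.

Definition gcoef (s : gsum) (m : gmono) : int :=
  \sum_(t <- s | t.2 == m) t.1.

(* coefficient at position l (0 = a0, l+1 = a_{l+1}) *)
Definition gget (m : gmono) (l : nat) : U :=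
  if l is l'.+1 then (nth (0%N, 0) m.2 l').2 else m.1.

Definition gset (m : gmono) (l : nat) (a : U) : gmono :=
  if l is l'.+1 then (m.1, set_nth (0%N, 0) m.2 l' ((nth (0%N, 0) m.2 l').1, a))
  else (a, m.2).

(* defining relations of  (+)_w  U (x)_C ... (x)_C U  =  U *_C C{X}:
   additivity in each slot and C-balancedness between adjacent slots *)
Definition grelator (r : gsum) : Prop :=
  (exists m l a b, (l <= size m.2)%N /\
     r = [:: ((1:int), gset m l (a + b)); (-1, gset m l a); (-1, gset m l b)]) \/
  (exists m l c, (l < size m.2)%N /\ ext_centroid c /\
     r = [:: ((1:int), gset m l (gget m l * c)); (-1, gset m l.+1 (c * gget m l.+1))]).

(* the element of U *_C C{X} represented by s is zero *)
Definition fp_zero (s : gsum) : Prop :=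
  exists rs : seq (int * gsum),
    (forall k r, (k, r) \in rs -> grelator r) /\
    forall m, gcoef s m = \sum_(kr <- rs) kr.1 * gcoef kr.2 m.

Definition is_GPI (R : U -> Prop) (s : gsum) : Prop :=
  forall x : nat -> U, (forall i, R (x i)) -> gsum_eval x s = 0.

Definition no_nontrivial_GPI (R : U -> Prop) : Prop :=
  forall s, is_GPI R s -> fp_zero s.

End Defs.

(* Main.v *)
Require Import Defs.
From HB Require Import structures.
From mathcomp Require Import all_boot all_order all_algebra all_fingroup.
From mathcomp Require Import zify.
From Stdlib Require Import Classical.
Import GRing.Theory.
Local Open Scope ring_scope.

Section Inv.
Variables (U S : nzRingType) (iota : U -> S) (X : nat -> S).
Hypothesis iotaD : forall a b, iota (a + b) = iota a + iota b.
Hypothesis iotaM : forall a b, iota (a * b) = iota a * iota b.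
Hypothesis iotaC : forall c v, ext_centroid c -> iota c * X v = X v * iota c.

Definition emono (m : gmono U) : S := iota m.1 * \prod_(p <- m.2) (X p.1 * iota p.2).
Definition esum (s : gsum U) : S := \sum_(t <- s) emono t.2 *~ t.1.

Lemma split1 (T : Type) (d : T) (ps : seq T) l : (l < size ps)%N ->
  exists A e B, ps = A ++ e :: B /\ size A = l.
Proof.
move=> h; exists (take l ps), (nth d ps l), (drop l.+1 ps).
by rewrite -drop_nth // cat_take_drop size_take h.
Qed.
Arguments split1 {T} d {ps l}.

Lemma set_nth_mid (T : Type) (d : T) A B e y :
  set_nth d (A ++ e :: B) (size A) y = A ++ y :: B.
Proof. by elim: A => //= a A ->. Qed.

Lemma set_nth_catR (T : Type) (d : T) A B i y :
  set_nth d (A ++ B) (size A + i) y = A ++ set_nth d B i y.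
Proof. by elim: A => //= a A ->. Qed.

Lemma nth_catR (T : Type) (d : T) A B i : nth d (A ++ B) (size A + i) = nth d B i.
Proof. by elim: A. Qed.

Lemma nth_mid (T : Type) (d : T) A B e : nth d (A ++ e :: B) (size A) = e.
Proof. by elim: A. Qed.

Lemma slot1 (m : gmono U) l : (l <= size m.2)%N ->
  exists L R, forall y, emono (gset m l y) = L * iota y * R.
Proof.
case: m => a0 ps /=; case: l => [|l] hl.
  by exists 1, (\prod_(p <- ps) (X p.1 * iota p.2)) => y; rewrite /emono /= mul1r.
have [A [e [B [-> hA]]]] := split1 (0%N, 0) hl.
exists (iota a0 * \prod_(p <- A) (X p.1 * iota p.2) * X e.1),
       (\prod_(p <- B) (X p.1 * iota p.2)) => y.
rewrite /emono /= -hA nth_mid set_nth_mid big_cat big_cons /=.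
by rewrite !mulrA.
Qed.

Lemma slot2 (m : gmono U) l : (l < size m.2)%N ->
  exists L R v, (forall y, emono (gset m l y) = L * iota y * (X v * iota (gget m l.+1)) * R)
    /\ (forall y, emono (gset m l.+1 y) = L * iota (gget m l) * (X v * iota y) * R).
Proof.
case: m => a0 ps /=; case: l => [|l] hl.
  case: ps hl => // e B _.
  exists 1, (\prod_(p <- B) (X p.1 * iota p.2)), e.1; split => y;
  by rewrite /emono /= big_cons /= !mul1r !mulrA.
have [A [e1 [B' [hps hA]]]] := split1 (0%N, 0) (ltnW hl).
case: B' hps => [|e2 B] hps.
  by move: hl; rewrite hps size_cat /= -hA addn1 ltnn.
exists (iota a0 * \prod_(p <- A) (X p.1 * iota p.2) * X e1.1),
       (\prod_(p <- B) (X p.1 * iota p.2)), e2.1.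
split => y; rewrite /emono /= hps -hA nth_mid.
  rewrite set_nth_mid -addn1 nth_catR /=.
  by rewrite big_cat !big_cons /= !mulrA.
rewrite -addn1 nth_catR set_nth_catR /=.
by rewrite big_cat !big_cons /= !mulrA.
Qed.

Arguments slot1 {m l}.
Arguments slot2 {m l}.

Lemma esum_rel r : grelator r -> esum r = 0.
Proof.
case=> [[m [l [a [b [hl ->]]]]] | [m [l [c [hl [hc ->]]]]]].
  have [L [R hLR]] := slot1 hl.
  rewrite /esum !big_cons big_nil /= !hLR mulr1z !mulrN1z addr0 iotaD.
  by rewrite mulrDr mulrDl addrACA !subrr addr0.
have [L [R [v [h1 h2]]]] := slot2 hl.
rewrite /esum !big_cons big_nil /= h1 h2 mulr1z mulrN1z addr0.
rewrite !iotaM; apply/eqP; rewrite subr_eq0; apply/eqP.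
change (nth (0%N,0) m.2 l).2 with (gget m l.+1).
set A := iota (gget m l); set B := iota (gget m l.+1).
rewrite !mulrA -[L * A * iota c * X v]mulrA iotaC //.
by rewrite !mulrA.
Qed.

Lemma esum_gcoef (s : gsum U) (M : seq (gmono U)) : uniq M ->
  {subset map snd s <= M} -> esum s = \sum_(m <- M) emono m *~ gcoef s m.
Proof.
move=> uM; elim: s => [|t s IH] hs.
  by rewrite /esum big_nil big1 // => m _; rewrite /gcoef big_nil mulr0z.
have ht : t.2 \in M by apply: hs; rewrite inE eqxx.
rewrite /esum big_cons -/(esum s) IH; last by move=> x hx; apply: hs; rewrite inE hx orbT.
have -> : \sum_(m <- M) emono m *~ gcoef (t :: s) m =
   \sum_(m <- M) (emono m *~ (if t.2 == m then t.1 else 0) + emono m *~ gcoef s m).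
  by apply: eq_bigr => m _; rewrite /gcoef big_cons -mulrzDr; case: eqP => _ //; rewrite add0r.
rewrite big_split /=; congr (_ + _).
rewrite (bigD1_seq t.2) //= eqxx big1 ?addr0 // => m hm.
by rewrite eq_sym (negbTE hm) mulr0z.
Qed.

Arguments esum_gcoef {s M}.

Lemma fp_zero_esum (s : gsum U) : fp_zero s -> esum s = 0.
Proof.
case=> rs [hrel hco].
set M := undup (map snd s ++ flatten [seq map snd kr.2 | kr <- rs]).
have uM : uniq M by apply: undup_uniq.
rewrite (esum_gcoef uM); last by move=> x hx; rewrite mem_undup mem_cat hx.
under eq_bigr => m _ do rewrite hco mulrz_sumr.
rewrite exchange_big /= big_seq big1 // => [[k r]] hkr /=.
have -> : \sum_(i <- M) emono i *~ (k * gcoef r i) =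
   (\sum_(i <- M) emono i *~ gcoef r i) * k%:~R.
  by rewrite mulr_suml; apply: eq_bigr => i _; rewrite mulrC mulrzA mulrzr.
rewrite -(esum_gcoef uM); first by rewrite esum_rel ?mul0r //; apply: hrel hkr.
move=> x hx; rewrite mem_undup mem_cat; apply/orP; right.
by apply/flattenP; exists (map snd r) => //; apply/mapP; exists (k, r).
Qed.

End Inv.
Arguments emono {U S} iota X m.
Arguments esum {U S} iota X s.
Section Enc.
Variables (U : nzRingType) (n' : nat) (alpha : 'S_n'.+1 -> U).

Definition block (s : 'S_n'.+1) (c : U) : seq (nat * U) :=
  [seq (val (s i), if i == ord_max then c else 1) | i <- index_enum 'I_n'.+1].

Definition mono (p q r : U) (s t : 'S_n'.+1) : gmono U :=
  (p * alpha s, block s (q * alpha t) ++ block t r).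

Definition Tm (p q r : U) : gsum U :=
  [seq ((1:int), mono p q r st.1 st.2) |
     st <- [seq (s, t) | s <- index_enum 'S_n'.+1, t <- index_enum 'S_n'.+1]].

Definition negs (s : gsum U) : gsum U := [seq (- t.1, t.2) | t <- s].

Definition Gs (a1 a2 a3 a4 a5 a6 : U) : gsum U :=
  Tm a1 1 1 ++ Tm a2 a3 1 ++ Tm 1 a5 a6 ++ Tm 1 a4 1 ++ negs (Tm a5 1 a6).

Variables (S : nzRingType) (iota : U -> S) (X : nat -> S).
Hypothesis iotaM : forall a b, iota (a * b) = iota a * iota b.
Hypothesis iota1 : iota 1 = 1.

Definition FX (s : 'S_n'.+1) : S := \prod_(i < n'.+1) X (val (s i)).
Definition Fs : S := \sum_(s : 'S_n'.+1) iota (alpha s) * FX s.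

Lemma block_prod s c :
  \prod_(p <- block s c) (X p.1 * iota p.2) = FX s * iota c.
Proof.
rewrite big_map /FX.
rewrite (big_ord_recr n' (fun i => X (val (s i)) * iota (if i == ord_max then c else 1))).
rewrite big_ord_recr /= eqxx mulrA; congr (_ * _ * _).
apply: eq_bigr => i _.
have -> : (widen_ord (leqnSn n') i == ord_max) = false.
  by apply/negbTE; rewrite -val_eqE /= neq_ltn ltn_ord.
by rewrite iota1 mulr1.
Qed.

Lemma emono_mono p q r s t : emono iota X (mono p q r s t) =
  iota p * (iota (alpha s) * FX s) * iota q * (iota (alpha t) * FX t) * iota r.
Proof. by rewrite /emono /= big_cat /= !block_prod !iotaM !mulrA. Qed.

Lemma esum_Tm p q r :
  esum iota X (Tm p q r) = iota p * Fs * iota q * Fs * iota r.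
Proof.
rewrite /esum big_map big_allpairs exchange_big /Fs.
rewrite mulr_sumr !mulr_suml; apply: eq_bigr => s _.
rewrite mulr_sumr !mulr_suml; apply: eq_bigr => t _.
by rewrite /= mulr1z emono_mono !mulrA.
Qed.

Lemma esum_cat s1 s2 : esum iota X (s1 ++ s2) = esum iota X s1 + esum iota X s2.
Proof. by rewrite /esum big_cat. Qed.

Lemma esum_negs s : esum iota X (negs s) = - esum iota X s.
Proof.
rewrite /esum big_map -sumrN; apply: eq_bigr => t _; by rewrite mulrNz.
Qed.

Lemma esum_Gs a1 a2 a3 a4 a5 a6 : esum iota X (Gs a1 a2 a3 a4 a5 a6) =
  iota a1 * Fs * iota 1 * Fs * iota 1 + iota a2 * Fs * iota a3 * Fs * iota 1
  + iota 1 * Fs * iota a5 * Fs * iota a6 + iota 1 * Fs * iota a4 * Fs * iota 1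
  - iota a5 * Fs * iota 1 * Fs * iota a6.
Proof. by rewrite /Gs !esum_cat esum_negs !esum_Tm !addrA. Qed.

End Enc.

Section Mat.
Variables (U : nzRingType) (N' : nat).

Definition rowd (Y : 'M[U]_N'.+1) p (y : U) nd := forall k, Y p k = y *+ (k == nd).

Lemma rowd_scal (a : U) p : rowd (a%:M) p a p.
Proof. by move=> k; rewrite mxE eq_sym. Qed.

Lemma rowd_mul Y Z p y z nd nd' : rowd Y p y nd -> rowd Z nd z nd' ->
  rowd (Y * Z) p (y * z) nd'.
Proof.
move=> hY hZ k; rewrite mxE (bigD1 nd) //= hY eqxx mulr1n hZ big1 ?addr0 ?mulrnAr //.
by move=> r hr; rewrite hY (negbTE hr) mulr0n mul0r.
Qed.

Arguments rowd_mul {Y Z p y z nd nd'}.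

Lemma rowd_term p y z a b c nd (F : 'M[U]_N'.+1) :
  rowd F p y nd -> rowd F nd z p ->
  (a%:M * F * b%:M * F * c%:M) p p = a * y * b * z * c.
Proof.
move=> h1 h2.
have := rowd_mul (rowd_mul (rowd_mul (rowd_mul (rowd_scal a p) h1) (rowd_scal b nd)) h2) (rowd_scal c p).
by move=> /(_ p); rewrite eqxx mulr1n.
Qed.

Variables (n : nat) (lab : 'I_N'.+1 -> 'I_n) (nxt : 'I_N'.+1 -> 'I_N'.+1) (w : 'I_N'.+1 -> U).

Definition zm (j : 'I_n) : 'M[U]_N'.+1 :=
  \matrix_(p, q) (if (lab p == j) && (q == nxt p) then w p else 0).

Lemma zmE j p q : zm j p q = if (lab p == j) && (q == nxt p) then w p else 0.
Proof. by rewrite mxE. Qed.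

Lemma walk k (G : 'I_k -> 'I_n) p q :
  (\prod_(i < k) zm (G i)) p q =
  if (\big[andb/true]_(i < k) (lab (iter i nxt p) == G i)) && (q == iter k nxt p)
  then \prod_(i < k) w (iter i nxt p) else 0.
Proof.
elim: k G p q => [|k IH] G p q.
  by rewrite !big_ord0 /= mxE eq_sym; case: eqP.
have hl : forall i : 'I_k, iter (lift ord0 i) nxt p = iter i nxt (nxt p).
  by move=> i; rewrite lift0 iterSr.
rewrite big_ord_recl mxE iterSr big_ord_recl big_ord_recl.
have h0 : iter ord0 nxt p = p by [].
rewrite !h0.
rewrite (eq_bigr (fun i : 'I_k => lab (iter i nxt (nxt p)) == G (lift ord0 i)));
  last by move=> i _; rewrite hl.
rewrite (eq_bigr (fun i : 'I_k => w (iter i nxt (nxt p))));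
  last by move=> i _; rewrite hl.
case hp: (lab p == G ord0) => /=.
  rewrite (bigD1 (nxt p)) //= zmE hp eqxx /= [X in _ + X]big1 ?addr0; last first.
    by move=> r hr; rewrite zmE hp /= (negbTE hr) mul0r.
  rewrite IH.
  by case: (_ && _); rewrite ?mulr0.
by apply: big1 => r _; rewrite zmE hp /= mul0r.
Qed.

End Mat.
Arguments zm {U N' n} lab nxt w j.
Arguments rowd {U N'} Y p y nd.
Arguments Fs {U n'} alpha {S} iota X.
Arguments FX {n' S} X s.

Lemma scal_l (U : nzRingType) (N' : nat) (c : U) (A : 'M[U]_N'.+1) i j :
  (c%:M * A) i j = c * A i j.
Proof.
rewrite mxE (bigD1 i) //= mxE eqxx mulr1n big1 ?addr0 // => k hk.
by rewrite mxE eq_sym (negbTE hk) mulr0n mul0r.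
Qed.

Lemma scal_r (U : nzRingType) (N' : nat) (c : U) (A : 'M[U]_N'.+1) i j :
  (A * c%:M) i j = A i j * c.
Proof.
rewrite mxE (bigD1 j) //= mxE eqxx mulr1n big1 ?addr0 // => k hk.
by rewrite mxE (negbTE hk) mulr0n mulr0.
Qed.

Section Spec.
Variables (U : nzRingType) (n' : nat) (alpha : 'S_n'.+1 -> U) (s : 'S_n'.+1) (u v : U).

Local Notation N := (n'.+1 + n').+1.

Definition labS (p : 'I_N) : 'I_n'.+1 := s (inord (p %% n'.+1)%N).
Definition nxtS (p : 'I_N) : 'I_N := inord ((p.+1) %% N)%N.
Definition wS (p : 'I_N) : U := if nat_of_ord p == 0%N then u else if nat_of_ord p == n'.+1 then v else 1.
Definition XS (k : nat) : 'M[U]_N := zm labS nxtS wS (inord k).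

Lemma iter_nxt i p : nat_of_ord (iter i nxtS p) = ((p + i) %% N)%N.
Proof.
elim: i => [|i IH] /=; first by rewrite addn0 modn_small.
rewrite /nxtS inordK; last by rewrite ltnS -ltnS ltn_pmod.
by rewrite IH -[(((p + i) %% N).+1)%N]addn1 modnDml addn1 addnS.
Qed.

Definition p0 : 'I_N := ord0.
Definition pn : 'I_N := inord n'.+1.

Lemma val_pn : nat_of_ord pn = n'.+1.
Proof. by rewrite inordK // ltnS leq_addr. Qed.

Lemma lab_p0 (i : 'I_n'.+1) : labS (iter i nxtS p0) = s i.
Proof.
rewrite /labS iter_nxt /= add0n (@modn_small i N); last first.
  by have := ltn_ord i; lia.
by rewrite modn_small // inord_val.
Qed.

Lemma lab_pn (i : 'I_n'.+1) : labS (iter i nxtS pn) = s i.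
Proof.
rewrite /labS iter_nxt val_pn (@modn_small _ N); last first.
  by have := ltn_ord i; lia.
by rewrite modnDl modn_small // inord_val.
Qed.

Lemma end_p0 : iter n'.+1 nxtS p0 = pn.
Proof.
apply: ord_inj; rewrite iter_nxt val_pn /= add0n modn_small //.
by rewrite ltnS leq_addr.
Qed.

Lemma end_pn : iter n'.+1 nxtS pn = p0.
Proof.
apply: ord_inj; rewrite iter_nxt val_pn /=.
by rewrite addnS modnn.
Qed.

Lemma w_p0 : \prod_(i < n'.+1) wS (iter i nxtS p0) = u.
Proof.
rewrite big_ord_recl big1 ?mulr1 // => i _.
rewrite /wS iter_nxt add0n lift0 modn_small; last first.
  by have := ltn_ord i; lia.
by have := ltn_ord i; case: eqP => //; case: eqP => //; lia.
Qed.

Lemma w_pn : \prod_(i < n'.+1) wS (iter i nxtS pn) = v.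
Proof.
rewrite big_ord_recl big1 ?mulr1.
  by rewrite /wS; change (iter ord0 nxtS pn) with pn; rewrite val_pn eqxx.
move=> i _; rewrite /wS iter_nxt val_pn lift0 modn_small; last first.
  by have := ltn_ord i; lia.
by have := ltn_ord i; case: eqP => //; case: eqP => //; lia.
Qed.

Lemma rowF (st en : 'I_N) (y : U) :
  (forall i : 'I_n'.+1, labS (iter i nxtS st) = s i) ->
  iter n'.+1 nxtS st = en -> \prod_(i < n'.+1) wS (iter i nxtS st) = y ->
  rowd (Fs alpha (fun a => a%:M) XS) st (alpha s * y) en.
Proof.
move=> hl he hw k; rewrite /Fs summxE (bigD1 s) //= big1 ?addr0.
  rewrite scal_l /FX.
  under eq_bigr => i _ do rewrite /XS inord_val.
  rewrite walk he hw.
  have -> : \big[andb/true]_(i < n'.+1) (labS (iter i nxtS st) == s i).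
    by rewrite big_andE; apply/forallP => i /=; rewrite hl eqxx.
  by rewrite /=; case: (k == en); rewrite ?mulr0 ?mulr1n ?mulr0n.
move=> t ht; rewrite scal_l /FX.
under eq_bigr => i _ do rewrite /XS inord_val.
rewrite walk.
have -> : \big[andb/true]_(i < n'.+1) (labS (iter i nxtS st) == t i) = false.
  apply/negbTE; rewrite big_andE; apply/negP => /forallP h.
  by move/eqP: ht; apply; apply/permP => i; move: (h i) => /= /eqP; rewrite hl.
by rewrite /= mulr0.
Qed.

End Spec.

Lemma sub2 (U : nzRingType) (x y z : U) : x + y = 0 -> x + z = 0 -> y - z = 0.
Proof. by move=> h1 h2; rewrite -(addKr x y) -(addKr x z) h1 h2 subrr. Qed.

Lemma sub2' (U : nzRingType) (x y z : U) : x + y = 0 -> z + y = 0 -> x - z = 0.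
Proof. by move=> h1 h2; rewrite -(addrK y x) h1 -(addrK y z) h2 subrr. Qed.

Arguments sub2 {U x y z}.
Arguments sub2' {U x y z}.

Section RingL.
Variables (U : nzRingType) (R : U -> Prop).
Hypothesis hU : is_utumi_quotient R.
Hypothesis hP : prime_ring R.

Lemma L0 (q w : U) : (forall r, R r -> q * r * w = 0) -> q = 0 \/ w = 0.
Proof.
move=> H.
have [[R0 Rsub Rmul] hdense hann _] := hU.
case: (hdense q) => I [hdI hqI].
have [[hIR _ _ hImul] _] := hdI.
case: (hdense w) => J [hdJ hwJ].
case: (classic (q = 0)) => [->|hq]; [by left | right].
have [y [hy hqy]] : exists y, I y /\ q * y <> 0.
  apply: NNPP => h; apply: hq; apply: (hann q I hdI) => x hx.
  by apply: NNPP => h'; apply: h; exists x.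
apply: (hann w J hdJ) => z hz.
have := hP _ _ (hqI y hy) (hwJ z hz).
case.
- move=> r hr; have hyr : R (y * r) by apply: hIR; apply: hImul.
  by rewrite !mulrA -(mulrA q) (H _ hyr) mul0r.
- by move=> h; exfalso; apply: hqy.
- done.
Qed.

Lemma L1 (c w : U) : ext_centroid c -> c * w = 0 -> c = 0 \/ w = 0.
Proof.
move=> hc h; apply: (@L0 c w) => r _.
by rewrite hc -mulrA h mulr0.
Qed.

Lemma L2 (b : U) : (forall r, R r -> b * r = r * b) -> ext_centroid b.
Proof.
move=> hb x.
have [[R0 Rsub Rmul] hdense hann _] := hU.
case: (hdense x) => I [hdI hxI].
have [[hIR _ _ _] _] := hdI.
apply/eqP; rewrite -subr_eq0; apply/eqP.
apply: (hann _ I hdI) => y hy.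
rewrite mulrBl -!mulrA (hb _ (hxI y hy)) (hb _ (hIR y hy)) mulrA.
by rewrite subrr.
Qed.

Lemma L3 (w : U) : (forall v, R v -> w * v = 0) -> w = 0.
Proof.
move=> H.
have [_ hdense hann _] := hU.
case: (hdense 0) => I [hdI _].
have [[hIR _ _ _] _] := hdI.
by apply: (hann _ I hdI) => x hx; apply: H; apply: hIR.
Qed.

Lemma notcent (a : U) : ~ ext_centroid a -> exists s, R s /\ a * s <> s * a.
Proof.
move=> ha; apply: NNPP => h; apply: ha; apply: L2 => r hr.
by apply: NNPP => h'; apply: h; exists r.
Qed.

Lemma M1 (p q b : U) : (forall v, R v -> p * v + q * v * b = 0) -> q = 0 \/ ext_centroid b.
Proof.
move=> H.
have [[R0 Rsub Rmul] _ _ _] := hU.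
case: (classic (q = 0)) => [->|hq]; [by left | right].
apply: L2 => r hr.
have K : forall v, R v -> q * v * (r * b - b * r) = 0.
  move=> v hv.
  have e1 := H _ (Rmul _ _ hv hr).
  have e2 : (p * v + q * v * b) * r = 0 by rewrite H // mul0r.
  rewrite mulrDl !mulrA in e1 e2.
  by rewrite mulrBr !mulrA; apply: sub2 e1 e2.
case: (L0 _ _ K) => // /eqP; rewrite subr_eq0 => /eqP.
by move=> ->.
Qed.

Lemma M2 (p q a b : U) : (forall u, R u -> p * u + a * u * b + u * q = 0) ->
  ext_centroid a \/ ext_centroid b.
Proof.
move=> H.
have [[R0 Rsub Rmul] _ _ _] := hU.
case: (classic (ext_centroid a)) => ha; [by left | right].
have [s [hs has]] := notcent _ ha.
apply: L2 => r hr.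
have S1 : forall u, R u -> a * u * (r * b - b * r) + u * (r * q - q * r) = 0.
  move=> u hu.
  have e1 := H _ (Rmul _ _ hu hr).
  have e2 : (p * u + a * u * b + u * q) * r = 0 by rewrite H // mul0r.
  rewrite -addrA !mulrDl -addrA !mulrA in e1 e2.
  rewrite !mulrBr !mulrA; have := sub2 e1 e2.
  by rewrite opprD addrACA.
have S2 : forall u, R u -> (a * s - s * a) * u * (r * b - b * r) = 0.
  move=> u hu.
  have e1 := S1 _ (Rmul _ _ hs hu).
  have e2 : s * (a * u * (r * b - b * r) + u * (r * q - q * r)) = 0.
    by rewrite S1 // mulr0.
  move: e1 e2; set W := r * b - b * r; set W' := r * q - q * r => e1 e2.
  rewrite mulrDr !mulrA in e2; rewrite !mulrA in e1.
  by rewrite !mulrBl; apply: sub2' e1 e2.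
by case: (L0 _ _ S2) => [/eqP|/eqP]; rewrite subr_eq0 => /eqP.
Qed.

End RingL.

Arguments XS {U n'} s u v k.
Arguments Gs {U n'} alpha a1 a2 a3 a4 a5 a6.
Arguments fp_zero_esum {U S iota X} iotaD iotaM iotaC {s}.

Arguments p0 {n'}.
Arguments pn {n'}.
Arguments rowd_term {U N' p y z} a b c {nd F}.

Lemma madd (U : nzRingType) (N' : nat) (A B : 'M[U]_N'.+1) i j :
  (A + B) i j = A i j + B i j.
Proof. by rewrite mxE. Qed.
Lemma mopp (U : nzRingType) (N' : nat) (A : 'M[U]_N'.+1) i j : (- A) i j = - A i j.
Proof. by rewrite mxE. Qed.
Lemma mzero (U : nzRingType) (N' : nat) i j : (0 : 'M[U]_N'.+1) i j = 0.
Proof. by rewrite mxE. Qed.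

Lemma cmove (U : nzRingType) (al x u y v z : U) : ext_centroid al ->
  x * (al * u) * y * (al * v) * z = al * al * (x * u * y * v * z).
Proof.
move=> h; rewrite !mulrA -(h x) -(h (al * x * u * y)).
by rewrite !mulrA.
Qed.

Theorem lemma3 (U : nzRingType) (R : U -> Prop) (n : nat) (alpha : 'S_n -> U)
    (a1 a2 a3 a4 a5 a6 : U) :
  is_utumi_quotient R ->
  prime_ring R ->
  (exists x y, [/\ R x, R y & x * y <> y * x]) ->
  (exists x, R x /\ x + x <> 0) ->
  (forall s, ext_centroid (alpha s)) ->
  (exists z : 'I_n -> U, (forall i, R (z i)) /\ ~ ext_centroid (mlin_eval alpha z)) ->
  (forall z : 'I_n -> U, (forall i, R (z i)) ->
     let f := mlin_eval alpha z in
     a1 * f * f + a2 * f * a3 * f + f * a5 * f * a6 + f * a4 * f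
       - a5 * f * f * a6 = 0) ->
  no_nontrivial_GPI R ->
  [\/ ext_centroid a2 /\ ext_centroid a5, ext_centroid a2 /\ ext_centroid a6,
      ext_centroid a3 /\ ext_centroid a5 | ext_centroid a3 /\ ext_centroid a6].
Proof.
move=> hU hP _ _ hal [z [hz hnc]] hid hgpi.
have [[R0 Rsub Rmul] _ _ _] := hU.
case: n alpha z hz hnc hid hal => [|n'] alpha z hz hnc hid hal.
  exfalso; apply: hnc; rewrite /mlin_eval.
  apply: (big_ind (fun x => ext_centroid x)).
  - by move=> w; rewrite mul0r mulr0.
  - by move=> x y hx hy w; rewrite mulrDl mulrDr hx hy.
  - by move=> i _; rewrite big_ord0 mulr1; apply: hal.
have [s hs] : exists s, alpha s <> 0.
  apply: NNPP => h; apply: hnc; rewrite /mlin_eval big1.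
    by move=> w; rewrite mul0r mulr0.
  move=> t _; have -> : alpha t = 0 by apply: NNPP => h'; apply: h; exists t.
  by rewrite mul0r.
have hG : is_GPI R (Gs alpha a1 a2 a3 a4 a5 a6).
  move=> x hx.
  change (esum (fun a => a) x (Gs alpha a1 a2 a3 a4 a5 a6) = 0).
  rewrite (@esum_Gs U n' alpha U (fun a => a) x (fun _ _ => erefl) erefl).
  have := hid (fun i => x (val i)) (fun i => hx _).
  rewrite /= /mlin_eval /Fs /FX /= !mulr1 !mul1r.
  by [].
have hfp := hgpi _ hG.
have key : forall u v : U, a1 * u * v + a2 * u * a3 * v + u * a5 * v * a6 + u * a4 * v
    - a5 * u * v * a6 = 0.
  move=> u v.
  have iotaD : forall a b : U, (a + b)%:M = a%:M + b%:M :> 'M[U]_((n'.+1 + n').+1).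
    by move=> a b; apply/matrixP => i j; rewrite !mxE mulrnDl.
  have iotaM : forall a b : U, (a * b)%:M = a%:M * b%:M :> 'M[U]_((n'.+1 + n').+1).
    by move=> a b; rewrite scalar_mxM.
  have iotaC : forall c k, ext_centroid c ->
      c%:M * XS s u v k = XS s u v k * c%:M :> 'M[U]_((n'.+1 + n').+1).
    by move=> c k hc; apply/matrixP => i j; rewrite scal_l scal_r hc.
  have := fp_zero_esum iotaD iotaM iotaC hfp.
  rewrite (@esum_Gs U n' alpha _ _ (XS s u v) iotaM erefl).
  have r1 : rowd (Fs alpha (fun a => a%:M) (XS s u v)) p0 (alpha s * u) pn.
    by apply: rowF; [exact: lab_p0 | exact: end_p0 | exact: w_p0].
  have r2 : rowd (Fs alpha (fun a => a%:M) (XS s u v)) pn (alpha s * v) p0.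
    by apply: rowF; [exact: lab_pn | exact: end_pn | exact: w_pn].
  move/(congr1 (fun M : 'M[U]_((n'.+1 + n').+1) => M p0 p0)); rewrite !madd mopp mzero.
  rewrite !(rowd_term _ _ _ r1 r2) !(cmove _ _ _ _ _ _ _ (hal s)).
  rewrite -mulrN -!mulrDr -mulrA => /(@L1 U R hU hP _ _ (hal s)) [] //.
  move=> /(@L1 U R hU hP _ _ (hal s)) [] //.
  by rewrite !mulr1 !mul1r.
have hR1 : forall u, R u -> forall v, R v ->
    (a1 * u + a2 * u * a3 + u * a4) * v + (u * a5 - a5 * u) * v * a6 = 0.
  move=> u _ v _; rewrite -(key u v) !mulrDl !mulNr.
  by rewrite addrA; congr (_ - _); rewrite addrAC.
have h56 : ext_centroid a5 \/ ext_centroid a6.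
  case: (classic (ext_centroid a6)) => h6; [by right | left].
  apply: (@L2 U R hU) => r hr.
  case: (@M1 U R hU hP _ _ a6 (hR1 r hr)) => [/eqP|//].
  by rewrite subr_eq0 => /eqP ->.
have h23 : ext_centroid a2 \/ ext_centroid a3.
  case: h56 => [h5 | h6].
    apply: (@M2 U R hU hP a1 a4 a2 a3) => u hu.
    apply: (@L3 U R hU) => v hv.
    by have := hR1 u hu v hv; rewrite (h5 u) subrr !mul0r addr0.
  apply: (@M2 U R hU hP (a1 - a5 * a6) (a4 + a5 * a6) a2 a3) => u hu.
  apply: (@L3 U R hU) => v hv.
  have := hR1 u hu v hv; rewrite -[(u * a5 - a5 * u) * v * a6]mulrA -(h6 v) mulrA -mulrDl.
  move=> <-; congr (_ * v).
  rewrite !mulrBl mulrDr !mulrA -(mulrA a5 u) -(h6 u) !mulrA.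
  by rewrite (addrAC (a1 * u)) addrACA (addrC (- _)).
case: h23 => h23; case: h56 => h56.
- by constructor 1.
- by constructor 2.
- by constructor 3.
- by constructor 4.
Qed.
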